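(* For an integer $k\ge 2$ let $m_k=2^{2^k-1}F_1F_2\cdots F_{k-1}$, where $F_j=2^{2^j}+1$ is the $j$-th Fermat number. Then $m_k$ is imperfect, i.e. $2\beta(m_k)=m_k$, if and only if $k\in\{2,3,4,5\}$.
   Context: $\beta$ is the multiplicative arithmetic function with $\beta(1)=1$ and $\beta(p^a)=p^a-p^{a-1}+\cdots+(-1)^a=\frac{p^{a+1}+(-1)^a}{p+1}$ for every prime power $p^a$ ($a\ge1$). A positive integer $n$ is called imperfect if $2\beta(n)=n$. *)

(* Defs.v *)
From mathcomp Require Import all_boot all_order all_algebra.
Set Implicit Arguments. Unset Strict Implicit. Unset Printing Implicit Defensive.
Import GRing.Theory Num.Theory.

Definition beta_pp (p a : nat) : int :=
  (\sum_(i < a.+1) (-1) ^+ (a - i) * (Posz p) ^+ i)%R.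

(* beta is multiplicative with beta(1) = 1: product over the prime factorization. *)
Definition beta (n : nat) : int :=
  (\prod_(p <- primes n) beta_pp p (logn p n))%R.

Definition imperfect (n : nat) : Prop := (0 < n)%N /\ (2 * beta n)%R = Posz n.

Definition fermat (j : nat) : nat := 2 ^ (2 ^ j) + 1.

Definition m_k (k : nat) : nat := 2 ^ (2 ^ k - 1) * \prod_(1 <= j < k) fermat j.

(* Main.v *)
Require Import Defs.
From mathcomp Require Import all_boot all_order all_algebra.
From mathcomp Require Import zify ring.
Import GRing.Theory Num.Theory.

Lemma beta_pp0 p : beta_pp p 0 = 1%R.
Proof. by rewrite /beta_pp big_ord1 /= expr0 mulr1. Qed.

Lemma beta_ppS p a : beta_pp p a.+1 = (Posz p ^+ a.+1 - beta_pp p a)%R.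
Proof.
rewrite /beta_pp big_ord_recr /= subnn expr0 mul1r addrC; congr (_ + _)%R.
rewrite -sumrN; apply: eq_bigr => i _ /=.
by rewrite subSn ?exprS ?mulN1r ?mulNr // -ltnS ltn_ord.
Qed.

Lemma beta_pp_closed p a :
  ((Posz p + 1) * beta_pp p a = Posz p ^+ a.+1 + (-1) ^+ a)%R.
Proof.
elim: a => [|a IH]; first by rewrite beta_pp0 expr1 expr0 mulr1.
rewrite beta_ppS mulrBr IH !exprS; set x := Posz p; set y := ((-1) ^+ a)%R; set z := (x ^+ a)%R; ring.
Qed.

Lemma beta1 p : prime p -> beta_pp p 1 = (Posz p - 1)%R.
Proof. by move=> _; rewrite beta_ppS beta_pp0 expr1. Qed.

Lemma betaE {n N} : (n < N)%N ->
  beta n = (\prod_(0 <= p < N | prime p) beta_pp p (logn p n))%R.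
Proof.
move=> nN; rewrite /beta.
have -> : (\prod_(0 <= p < N | prime p) beta_pp p (logn p n) =
           \prod_(p <- index_iota 0 N | p \in primes n) beta_pp p (logn p n))%R.
  rewrite [RHS]big_mkcond [LHS]big_mkcond; apply: eq_bigr => p _.
  case pp: (prime p); case pn: (p \in primes n) => //.
    by move: pn; rewrite -logn_gt0 lt0n => /negbFE/eqP ->; rewrite beta_pp0.
  by move: pn; rewrite mem_primes pp.
rewrite -[in RHS]big_filter; apply: perm_big; apply: uniq_perm.
- exact: primes_uniq.
- by rewrite filter_uniq // iota_uniq.
move=> p; rewrite mem_filter mem_index_iota /=.
case pn: (p \in primes n) => //=; move: pn; rewrite mem_primes.
case/and3P=> _ n0 pd; rewrite (leq_ltn_trans (dvdn_leq n0 pd)) //.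
Qed.

Lemma betaM m n : coprime m n -> (0 < m)%N -> (0 < n)%N ->
  beta (m * n) = (beta m * beta n)%R.
Proof.
move=> cmn m0 n0.
have mN : (m < (m * n).+1)%N by rewrite ltnS leq_pmulr.
have nN : (n < (m * n).+1)%N by rewrite ltnS leq_pmull.
rewrite (betaE (ltnSn (m * n))) (betaE mN) (betaE nN) -big_split /=.
apply: eq_bigr => p pp; rewrite lognM //.
case pm: (p %| m).
  have -> : logn p n = 0%N.
    rewrite lognE; case pn: (p %| n); last by rewrite !andbF.
    have : p %| gcdn m n by rewrite dvdn_gcd pm pn.
    by rewrite (eqP cmn) dvdn1 => /eqP p1; rewrite p1 in pp.
  by rewrite addn0 beta_pp0 mulr1.
have -> : logn p m = 0%N by rewrite lognE pm !andbF.
by rewrite add0n beta_pp0 mul1r.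
Qed.

Lemma beta_pow p a : prime p -> beta (p ^ a) = beta_pp p a.
Proof.
move=> pp; case: a => [|a].
  by rewrite expn0 /beta /primes /= big_nil beta_pp0.
by rewrite /beta primesX // primes_prime // big_seq1 pfactorK.
Qed.

Definition Pk k := \prod_(1 <= j < k) fermat j.
Definition Qk k := \prod_(0 <= j < k) fermat j.

Lemma Qk_eq k : (Qk k + 1 = 2 ^ (2 ^ k))%N.
Proof.
elim: k => [|k IH]; first by rewrite /Qk big_geq.
rewrite /Qk big_nat_recr //= -/(Qk k) /fermat expnS [2 * _]mulnC expnM -IH.
set q := Qk k; nia.
Qed.

Lemma Qk_Pk k : (0 < k)%N -> Qk k = (3 * Pk k)%N.
Proof. by move=> k0; rewrite /Qk big_ltn. Qed.

Lemma Qk_odd k : odd (Qk k).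
Proof.
have ev : ~~ odd (2 ^ 2 ^ k) by rewrite oddX expn_eq0.
by move: ev; rewrite -Qk_eq addn1 /= negbK.
Qed.

Lemma Pk_odd k : odd (Pk k).
Proof.
case: k => [|k]; first by rewrite /Pk big_geq.
by have := Qk_odd k.+1; rewrite Qk_Pk // oddM.
Qed.

Lemma Pk_pos k : (0 < Pk k)%N.
Proof. by rewrite lt0n; apply/eqP => e; have := Pk_odd k; rewrite e. Qed.

Lemma coprime_Pk k : coprime (Pk k) (fermat k).
Proof.
case: k => [|k]; first by rewrite /Pk big_geq // /coprime gcd1n.
apply: (coprime_dvdl (n := Qk k.+1)); first by rewrite Qk_Pk // dvdn_mull.
have e : fermat k.+1 = (Qk k.+1 + 2)%N by rewrite /fermat -Qk_eq -addnA.
rewrite e /coprime gcdnDl.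
have := Qk_odd k.+1; move: (Qk k.+1) => q oq.
by rewrite gcdnC -gcdn_modr modn2 oq.
Qed.

Lemma PoszX a b : Posz (a ^ b) = ((Posz a) ^+ b)%R.
Proof. by rewrite -[LHS]natz natrX natz. Qed.

Lemma beta_two k : (0 < k)%N -> beta (2 ^ (2 ^ k - 1)) = Posz (Pk k).
Proof.
move=> k0; rewrite beta_pow //.
have h := beta_pp_closed 2 (2 ^ k - 1).
have k1 : (1 <= 2 ^ k)%N by rewrite expn_gt0.
rewrite -signr_odd oddB // oddX (negbTE (lt0n_neq0 k0)) /= in h.
rewrite subnSK // subn0 -PoszX -Qk_eq Qk_Pk // in h.
move: h; rewrite expr1 PoszD PoszM; lia.
Qed.

Lemma beta_mk k : (0 < k)%N -> beta (m_k k) = (Posz (Pk k) * beta (Pk k))%R.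
Proof.
move=> k0; rewrite /m_k -/(Pk k) betaM ?beta_two ?expn_gt0 ?Pk_pos //.
by apply: coprimeXl; rewrite coprime2n Pk_odd.
Qed.

Lemma beta_Pk_good k : (0 < k)%N -> (forall j, (1 <= j < k)%N -> prime (fermat j)) ->
  beta (Pk k) = Posz (2 ^ (2 ^ k - 2)).
Proof.
elim: k => [//|k IH] _ hp.
case: k IH hp => [|k] IH hp.
  by rewrite /Pk big_geq // /beta /primes /= big_nil.
rewrite /Pk big_nat_recr //= -/(Pk k.+1) betaM ?Pk_pos ?coprime_Pk //; last first.
  by rewrite /fermat addn1.
rewrite IH // => [|j /andP [j1 jk]]; last by apply: hp; rewrite j1 ltnW.
have pf := hp k.+1 (leqnn _).
rewrite -(expn1 (fermat k.+1)) beta_pow // beta1 // /fermat PoszD addrK.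
rewrite -PoszM -expnD; congr (Posz (2 ^ _)).
have h2 : (2 <= 2 ^ k.+1)%N by rewrite (expnS 2 k) leq_pmulr ?expn_gt0.
rewrite (expnS 2 k.+1); lia.
Qed.

Lemma bad641 b N : (0 < b)%N -> ~~ (`|beta_pp 641 b| %| 2 ^ N)%N.
Proof.
move=> b0; apply/negP => /(dvdn_pfactor _ _ (isT : prime 2)) [t _ ht].
have h := beta_pp_closed 641 b.
have X1 : (1 <= 641 ^ b.+1)%N by rewrite expn_gt0.
have X4 : (641 ^ b.+1 %% 4 = 1)%N by rewrite -modnXm exp1n.
have X5 : (641 ^ b.+1 %% 5 = 1)%N by rewrite -modnXm exp1n.
have T5 : (2 ^ t %% 5 != 0)%N.
  by apply/negP => h5; have : (5 %| 2 ^ t)%N := h5; rewrite Euclid_dvdX.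
have X2 : (641 ^ 2 <= 641 ^ b.+1)%N by rewrite leq_exp2l // ltnS.
have T2 : (2 ^ t = 1 \/ 2 ^ t %% 2 = 0)%N.
  by case: (t) => [|t1]; [left | right; rewrite expnS modnMr].
rewrite -signr_odd -PoszX in h.
move: X1 X2 X4 X5 T5 T2 h ht.
set X := (641 ^ b.+1)%N; set T := (2 ^ t)%N.
case ob: (odd b) => /=.
  move=> X1 X2 X4 X5 T5 T2 h ht; lia.
move=> X1 X2 X4 X5 T5 T2 h ht; lia.
Qed.

Lemma dvd641 : (641 %| fermat 5)%N.
Proof.
rewrite /fermat.
have e : (2 ^ 5 = 16 * 2)%N by [].
rewrite e expnM.
have hx : (2 ^ 16 %% 641 = 154)%N by vm_compute.
move: hx; move: (2 ^ 16)%N => x hx.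
rewrite /dvdn -modnDml -modnXm hx.
vm_compute. reflexivity.
Qed.

Lemma dvd641P k : (6 <= k)%N -> (641 %| Pk k)%N.
Proof.
move=> k6; rewrite /Pk (big_cat_nat (n := 6) (isT : (1 <= 6)%N) k6).
rewrite (big_nat_recr 5 1 _ (isT : (1 <= 5)%N)).
apply: dvdn_mulr; apply: dvdn_mull; exact: dvd641.
Qed.

Lemma not_imperfect k : (6 <= k)%N -> ~ imperfect (m_k k).
Proof.
move=> k6 [_ h].
have k0 : (0 < k)%N by apply: leq_trans k6.
rewrite beta_mk // /m_k -/(Pk k) in h.
have P0 := Pk_pos k.
have d641 := dvd641P k k6.
have p641 : prime 641 by [].
move: h d641 P0.
set P := Pk k; set a := (2 ^ k - 1)%N => h d641 P0.
have a0 : (0 < a)%N.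
  rewrite /a; have : (2 <= 2 ^ k)%N.
    by rewrite -[2%N]/(2 ^ 1)%N leq_exp2l // (leq_trans _ k0).
  lia.
have eT : (2 ^ a = 2 * 2 ^ (a - 1))%N by rewrite -expnS subn1 prednK.
set T := (2 ^ (a - 1))%N in eT.
have hB : beta P = Posz T.
  rewrite eT in h.
  have h2 : (Posz P * (2 * beta P) = Posz P * (2 * Posz T))%R.
    rewrite mulrCA h PoszM PoszM; lia.
  have := mulfI _ h2; rewrite -[Posz P == 0]/(P == 0%N) -lt0n P0 => /(_ isT).
  lia.
have l641 : (641 <= P)%N by apply: dvdn_leq.
move: hB; rewrite (betaE (ltnSn P)) big_mkcond.
rewrite (big_cat_nat (n := 641) (isT : (0 <= 641)%N) (leqW l641)).
have l641' : (641 < P.+1)%N by rewrite ltnS.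
rewrite (big_ltn l641') p641 /=.
set A := \big[_/_]_(0 <= i < 641) _; set C := \big[_/_]_(642 <= i < P.+1) _.
move=> /(congr1 absz); rewrite !abszM /= => eT2.
have b0 : (0 < logn 641 P)%N by rewrite logn_gt0 mem_primes p641 P0 d641.
have := bad641 (logn 641 P) (a - 1) b0; rewrite -/T -eT2 => /negP; apply.
by apply: dvdn_mull; apply: dvdn_mulr.
Qed.

Theorem mainTheorem2 (k : nat) (hk : (2 <= k)%N) :
  imperfect (m_k k) <-> k \in [:: 2; 3; 4; 5]%N.
Proof.
have k0 : (0 < k)%N by apply: leq_trans hk.
split.
  move=> h; have [k6|k5] := leqP 6 k; first by case: (not_imperfect k k6 h).
  by move: hk k5; case: k {k0 h} => [|[|[|[|[|[|k]]]]]].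
move=> kin.
have k5 : (k < 6)%N by move: kin; rewrite !inE => /or4P [] /eqP ->.
have hp : forall j, (1 <= j < k)%N -> prime (fermat j).
  move=> j /andP [j1 jk]; have j5 : (j < 5)%N by apply: leq_trans jk _.
  by move: j1 j5; case: j {jk} => [|[|[|[|[|j]]]]].
split; first by rewrite /m_k muln_gt0 expn_gt0 -/(Pk k) Pk_pos.
rewrite beta_mk // beta_Pk_good // /m_k -/(Pk k).
have h2 : (2 <= 2 ^ k)%N by rewrite -[2%N]/(2 ^ 1)%N leq_exp2l.
have eT : (2 ^ (2 ^ k - 1) = 2 * 2 ^ (2 ^ k - 2))%N.
  by rewrite -expnS; congr (2 ^ _)%N; lia.
rewrite eT; move: (2 ^ (2 ^ k - 2))%N (Pk k) => x y.
rewrite !PoszM; lia.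
Qed.
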